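(* Let $s\in\mathbb N$, $\mathbf n<2^{2m_s+1}\mathbf 1$, and let $\Delta^{(m_s)}$ be a dyadic cube of rank $m_s$ with $\Delta^{(m_s)}\subset\widetilde F_{s-1}$. Then, for $\tau=\tau_F$, $$\int_{F_s\cap\Delta^{(m_s)}}W_{\mathbf n}\,d\mu=2^{-s}\int_{\Delta^{(m_s)}}W_{\mathbf n}\,d\tau=2^{-s}\widehat\tau_{\mathbf n}(\Delta^{(m_s)}).$$ The same holds when $F_s$, $\widetilde F_{s-1}$ and $\tau$ are replaced by $F^{\boldsymbol\pi}_s$, $\widetilde F^{\boldsymbol\pi}_{s-1}$ and $\tau^{\boldsymbol\pi}=\tau_{F^{\boldsymbol\pi}}$, for any sequence $\boldsymbol\pi=(\boldsymbol\pi_s)$ of permutations $\boldsymbol\pi_s$ of $\{0,\dots,2^{m_s}-1\}^d$.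
   Context: Fix $d\ge2$. $\mathbb G$ is the dyadic group: sequences $g=(g_k)_{k\ge0}$, $g_k\in\{0,1\}$, coordinatewise addition mod 2, product topology; $\mathbb G^d$ its $d$-th power, $\mu$ its normalized Haar measure. For $n\in\mathbb N_0$, $n=\sum_kn_k2^k$, $n_k\in\{0,1\}$. Dyadic interval of rank $k$: $\Delta^{(k)}_m=\{g: g_t=m_{k-1-t},\ 0\le t<k\}$; dyadic cube $\Delta^{(k)}_{\mathbf m}=\prod_l\Delta^{(k)}_{m^l}$. Vector order coordinatewise, $\mathbf 1=(1,\dots,1)$. Walsh functions $W_n(g)=\prod_k(-1)^{g_kn_k}$, $W_{\mathbf n}(\mathbf g)=\prod_lW_{n^l}(g^l)$; $W^{(k)}_{\mathbf n\mathbf m}$ is the constant value of $W_{\mathbf n}$ on $\Delta^{(k)}_{\mathbf m}$ ($\mathbf n,\mathbf m<2^k\mathbf 1$); $R_{k\mathbf 1}:=W_{2^k\mathbf 1}$. Quasimeasure: $\tau$ on dyadic cubes with $\tau(\Delta^{(k)}_{\mathbf m})=\sum_{\boldsymbol\sigma\in\{0,1\}^d}\tau(\Delta^{(k+1)}_{2\mathbf m+\boldsymbol\sigma})$; for a dyadic cube $\Delta$ of rank $r$, $\widehat\tau_{\mathbf n}(\Delta)=\int_\Delta W_{\mathbf n}d\tau:=\sum_{\Delta^{(k)}_{\mathbf m}\subset\Delta}W^{(k)}_{\mathbf n\mathbf m}\tau(\Delta^{(k)}_{\mathbf m})$ for any $k\ge r$ with $\mathbf n<2^k\mathbf 1$.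 For nonempty closed $E$, $\tau_E$ is the unique nonnegative quasimeasure with $\tau_E(\mathbb G^d)=1$, $\tau_E(\Delta)=0$ iff $\Delta\cap E=\emptyset$, splitting the value of a cube meeting $E$ equally among its $2^d$ children that meet $E$. Let $m_1=0$, $m_{s+1}=2(2m_s+1)$. $F_s=\bigcup_{\mathbf m,\mathbf m'<2^{m_s}\mathbf 1}\{\mathbf g\in\Delta^{(2m_s)}_{2^{m_s}\mathbf m+\mathbf m'}: R_{2m_s\mathbf 1}(\mathbf g)=W^{(m_s)}_{\mathbf m\mathbf m'}\}$, $\widetilde F_s=\bigcap_{k=1}^sF_k$, $\widetilde F_0=\mathbb G^d$, $F=\bigcap_sF_s$. $F^{\boldsymbol\pi}_s$ is defined likewise with $W^{(m_s)}_{\boldsymbol\pi_s(\mathbf m)\,\mathbf m'}$ in place of $W^{(m_s)}_{\mathbf m\mathbf m'}$; $\widetilde F^{\boldsymbol\pi}_s=\bigcap_{k=1}^sF^{\boldsymbol\pi}_k$, $\widetilde F^{\boldsymbol\pi}_0=\mathbb G^d$, $F^{\boldsymbol\pi}=\bigcap_sF^{\boldsymbol\pi}_s$. *)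

(* Defs.v *)
From HB Require Import structures.
From mathcomp Require Import all_boot all_order all_algebra.
From mathcomp Require Import all_classical all_reals all_analysis.
Set Implicit Arguments. Unset Strict Implicit. Unset Printing Implicit Defensive.
Import Order.TTheory GRing.Theory Num.Theory.
Local Open Scope classical_set_scope.
Local Open Scope ring_scope.

(* A point of G^d : g l t = g^l_t  (coordinate l in 'I_d, digit t). *)
Definition pt (d : nat) := 'I_d -> nat -> bool.

Definition nbit (n k : nat) : bool := odd (n %/ 2 ^ k).

(* dyadic cube Delta^(k)_m, m a vector of naturals (m^l < 2^k intended):
   g^l_t = m^l_{k-1-t} for 0 <= t < k *)
Definition cube d (k : nat) (m : 'I_d -> nat) : set (pt d) :=
  [set g | forall (l : 'I_d) (t : nat), (t < k)%N -> g l t = nbit (m l) (k - 1 - t)].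

Definition dcubes d : set (set (pt d)) := [set A | exists k m, A = cube k m].

(* G^d as a measurable space (sigma-algebra generated by the dyadic cubes,
   which is the Borel sigma-algebra of the product topology) *)
Definition Gd d := g_sigma_algebraType (@dcubes d).

Definition gadd d (g h : pt d) : pt d := fun l t => addb (g l t) (h l t).

Definition W1 {R : realType} (n : nat) (g : nat -> bool) : R :=
  \prod_(t < n) (-1) ^+ (g t && nbit n t).
Definition W {R : realType} d (n : 'I_d -> nat) (g : pt d) : R :=
  \prod_(l < d) W1 (n l) (g l).

Definition cube_pt d (k : nat) (m : 'I_d -> nat) : pt d :=
  fun l t => if (t < k)%N then nbit (m l) (k - 1 - t) else false.

Definition idx d (k : nat) := {ffun 'I_d -> 'I_(2 ^ k)}.
Definition nv d k (m : idx d k) : 'I_d -> nat := fun l => nat_of_ord (m l).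

(* W^(k)_{n m}: the (constant) value of W_n on Delta^(k)_m *)
Definition Wk {R : realType} d (k : nat) (n m : 'I_d -> nat) : R :=
  W n (cube_pt k m).

Definition Rk {R : realType} d (k : nat) (g : pt d) : R :=
  W (fun _ : 'I_d => (2 ^ k)%N) g.

(* m_1 = 0, m_{s+1} = 2(2 m_s + 1);  msq j = m_{j+1},  ms s = m_s for s >= 1 *)
Fixpoint msq (j : nat) : nat :=
  match j with 0 => 0%N | j'.+1 => (2 * (2 * msq j' + 1))%N end.
Definition ms (s : nat) : nat := msq s.-1.

Definition Fp {R : realType} d (s : nat) (p : idx d (ms s) -> idx d (ms s)) : set (pt d) :=
  [set g | exists m m' : idx d (ms s),
      cube (2 * ms s) (fun l => 2 ^ ms s * nv m l + nv m' l)%N g /\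
      Rk (R := R) (2 * ms s) g = Wk (ms s) (nv (p m)) (nv m')].

Arguments Fp {R d} s p.

Definition Fs {R : realType} d (s : nat) : set (pt d) := Fp (R := R) s id.

Definition Ftilp {R : realType} d (p : forall s, idx d (ms s) -> idx d (ms s))
  (s : nat) : set (pt d) :=
  [set g | forall k, (1 <= k <= s)%N -> Fp (R := R) k (p k) g].
Definition Ftil {R : realType} d (s : nat) : set (pt d) :=
  Ftilp (R := R) (fun s => id) s.

Definition Finfp {R : realType} d (p : forall s, idx d (ms s) -> idx d (ms s)) : set (pt d) :=
  [set g | forall s, (1 <= s)%N -> Fp (R := R) s (p s) g].
Definition Finf {R : realType} d : set (pt d) := Finfp (R := R) (fun s => id).

(* quasimeasures: tau k m = tau(Delta^(k)_m) *)
Definition child d (m : 'I_d -> nat) (sg : {ffun 'I_d -> bool}) : 'I_d -> nat :=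
  fun l => (2 * m l + sg l)%N.

Definition inrange d (k : nat) (m : 'I_d -> nat) := forall l, (m l < 2 ^ k)%N.

Definition quasimeasure {R : realType} d (tau : nat -> ('I_d -> nat) -> R) : Prop :=
  forall k m, inrange k m -> tau k m = \sum_(sg : {ffun 'I_d -> bool}) tau k.+1 (child m sg).

Definition is_tauE {R : realType} d (E : set (pt d)) (tau : nat -> ('I_d -> nat) -> R) : Prop :=
  [/\ quasimeasure tau,
      (forall k m, inrange k m -> 0 <= tau k m),
      tau 0%N (fun _ => 0%N) = 1,
      (forall k m, inrange k m -> (tau k m = 0 <-> cube k m `&` E = set0))
    & (forall k m sg sg', inrange k m ->
         cube k.+1 (child m sg) `&` E !=set0 ->
         cube k.+1 (child m sg') `&` E !=set0 ->
         tau k.+1 (child m sg) = tau k.+1 (child m sg'))].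

(* hat tau_n(Delta^(r)_{m0}) = sum over rank-k cubes inside Delta^(r)_{m0},
   computed at a rank k >= r with n < 2^k 1 *)
Definition tau_hat {R : realType} d (tau : nat -> ('I_d -> nat) -> R)
  (n : 'I_d -> nat) (r : nat) (m0 : 'I_d -> nat) (k : nat) : R :=
  \sum_(m : idx d k | `[< cube k (nv m) `<=` cube r m0 >]) Wk k n (nv m) * tau k (nv m).

(* Main.v *)
Require Import Defs.
From HB Require Import structures.
From mathcomp Require Import all_boot all_order all_algebra.
From mathcomp Require Import all_classical all_reals all_analysis.
From mathcomp Require Import fingroup perm.
From mathcomp Require Import zify ring lra.
Set Implicit Arguments. Unset Strict Implicit. Unset Printing Implicit Defensive.
Import Order.TTheory GRing.Theory Num.Theory.
Local Open Scope classical_set_scope.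
Local Open Scope ring_scope.

Lemma nbit0 a : nbit a 0 = odd a.
Proof. by rewrite /nbit expn0 divn1. Qed.

Lemma nbitS a i : nbit a i.+1 = nbit a./2 i.
Proof. by rewrite /nbit expnS divnMA -divn2. Qed.

Lemma nbit_child0 a (b : bool) : nbit (2 * a + b) 0 = b.
Proof. by rewrite nbit0 oddD oddM /=; case: b. Qed.

Lemma half_child a (b : bool) : (2 * a + b)./2 = a.
Proof. rewrite -divn2 mulnC divnMDl //; case: b => /=; by [rewrite divn_small // addn0 | rewrite div0n addn0]. Qed.

Lemma nbit_childS a (b : bool) i : nbit (2 * a + b) i.+1 = nbit a i.
Proof. by rewrite nbitS half_child. Qed.

Lemma nbit_big a i : (a < 2 ^ i)%N -> nbit a i = false.
Proof. by move=> h; rewrite /nbit divn_small. Qed.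

Lemma nbit_pow2 a t : nbit (2 ^ a) t = (t == a).
Proof.
elim: t a => [|t IH] [|a].
- by rewrite nbit0.
- by rewrite nbit0 expnS oddM.
- by rewrite nbitS /nbit div0n.
- by rewrite nbitS expnS -divn2 mulKn // IH eqSS.
Qed.

Lemma nbit_inj k a b : (a < 2 ^ k)%N -> (b < 2 ^ k)%N ->
  (forall i, (i < k)%N -> nbit a i = nbit b i) -> a = b.
Proof.
elim: k a b => [|k IH] a b.
  by rewrite expn0 !ltnS !leqn0 => /eqP-> /eqP->.
move=> ha hb h.
rewrite -(odd_double_half a) -(odd_double_half b).
have h0 := h 0%N isT; rewrite !nbit0 in h0; rewrite h0.
congr (_ + _); congr (_.*2); apply: IH.
- by rewrite -divn2 ltn_divLR // -expnSr.
- by rewrite -divn2 ltn_divLR // -expnSr.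
- by move=> i hi; rewrite -!nbitS; apply: h.
Qed.

Fixpoint num (f : nat -> bool) (k : nat) : nat :=
  if k is k'.+1 then (f 0%N + 2 * num (fun j => f j.+1) k')%N else 0%N.

Lemma num_lt k f : (num f k < 2 ^ k)%N.
Proof.
elim: k f => [|k IH] f //=.
have := IH (fun j => f j.+1); rewrite expnS; case: (f 0%N) => /=; lia.
Qed.

Lemma nbit_num k f i : (i < k)%N -> nbit (num f k) i = f i.
Proof.
elim: k f i => [|k IH] f [|i] //= hi.
- by rewrite addnC nbit_child0.
- by rewrite addnC nbit_childS IH.
Qed.

Definition agree d (k : nat) (g h : pt d) := forall l t, (t < k)%N -> g l t = h l t.

Lemma agree_sym d k (g h : pt d) : agree k g h -> agree k h g.
Proof. by move=> H l t ht; rewrite H. Qed.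

Lemma agree_trans d k (g h i : pt d) : agree k g h -> agree k h i -> agree k g i.
Proof. by move=> H1 H2 l t ht; rewrite H1 // H2. Qed.

Lemma agree_le d k k' (g h : pt d) : (k' <= k)%N -> agree k g h -> agree k' g h.
Proof. by move=> hk H l t ht; apply: H; apply: leq_trans hk. Qed.

Lemma cubeE d k m (g : pt d) : cube k m g <-> agree k g (cube_pt k m).
Proof.
split => H l t ht; move: (H l t ht); by rewrite /cube_pt ht.
Qed.

Lemma cube_pt_in d k m : cube k m (@cube_pt d k m).
Proof. by apply/cubeE. Qed.

Lemma cube_agree d k m (g h : pt d) : cube k m g -> agree k g h -> cube k m h.
Proof.
move=> /cubeE H1 H2; apply/cubeE; apply: agree_trans H1.
exact: agree_sym.
Qed.

Lemma cube_cube_agree d k m (g h : pt d) : cube k m g -> cube k m h -> agree k g h.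
Proof.
move=> /cubeE H1 /cubeE H2; apply: agree_trans H1 _; exact: agree_sym.
Qed.

Definition ixf d k (g : pt d) (l : 'I_d) : 'I_(2 ^ k) :=
  Ordinal (num_lt k (fun j => g l (k - 1 - j)%N)).

Definition ixd d k (g : pt d) : idx d k := [ffun l => ixf k g l].

Lemma cube_ixd d k (g : pt d) : cube k (nv (ixd k g)) g.
Proof.
move=> l t ht; rewrite /nv ffunE /= nbit_num; last by lia.
congr (g l _); lia.
Qed.

Lemma cube_uniq d k (A B : 'I_d -> nat) (g : pt d) :
  inrange k A -> inrange k B -> cube k A g -> cube k B g -> A = B.
Proof.
move=> hA hB cA cB; apply: funext => l.
apply: (nbit_inj (hA l) (hB l)) => i hi.
have := cA l (k - 1 - i)%N; have := cB l (k - 1 - i)%N.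
have -> : (k - 1 - (k - 1 - i) = i)%N by lia.
move=> <-; last by lia. by move=> <-; last by lia.
Qed.

Lemma nv_inj d k (m1 m2 : idx d k) : nv m1 = nv m2 -> m1 = m2.
Proof.
move=> h; apply/ffunP => l; apply: val_inj.
exact: (congr1 (fun f => f l) h).
Qed.

Lemma inrange_nv d k (m : idx d k) : inrange k (nv m).
Proof. by move=> l; rewrite /nv ltn_ord. Qed.

Lemma cube_child d k (m : 'I_d -> nat) sg (g : pt d) :
  cube k.+1 (child m sg) g <-> (cube k m g /\ forall l, g l k = sg l).
Proof.
split.
- move=> H; split.
  + move=> l t ht; rewrite H; last by lia.
    have -> : (k.+1 - 1 - t = (k - 1 - t).+1)%N by lia.
    by rewrite /child nbit_childS.
  + move=> l; rewrite H //; have -> : (k.+1 - 1 - k = 0)%N by lia.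
    by rewrite /child nbit_child0.
- move=> [H1 H2] l t; rewrite ltnS leq_eqVlt => /orP[/eqP ->|ht].
  + rewrite H2; have -> : (k.+1 - 1 - k = 0)%N by lia.
    by rewrite /child nbit_child0.
  + rewrite H1 //; have -> : (k.+1 - 1 - t = (k - 1 - t).+1)%N by lia.
    by rewrite /child nbit_childS.
Qed.

Lemma W1_agree (R : realType) n K (g h : nat -> bool) : (n < 2 ^ K)%N ->
  (forall t, (t < K)%N -> g t = h t) -> W1 (R:=R) n g = W1 n h.
Proof.
move=> hn H; rewrite /W1; apply: eq_bigr => -[t ht] _ /=.
case: (ltnP t K) => htK; first by rewrite H.
rewrite nbit_big ?andbF //; apply: (leq_trans hn); by rewrite leq_exp2l.
Qed.

Lemma W_agree (R : realType) d (n : 'I_d -> nat) K (g h : pt d) :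
  (forall l, (n l < 2 ^ K)%N) -> agree K g h -> W (R:=R) n g = W n h.
Proof.
move=> hn H; rewrite /W; apply: eq_bigr => l _; apply: W1_agree (hn l) _.
by move=> t ht; apply: H.
Qed.

Lemma W1_pow2 (R : realType) a (g : nat -> bool) : W1 (R:=R) (2 ^ a) g = (-1) ^+ g a.
Proof.
rewrite /W1 (bigD1 (Ordinal (ltn_expl a (isT : (1 < 2)%N)))) //= (nbit_pow2 a a) eqxx andbT.
rewrite big1 ?mulr1 // => -[t ht] /= hne.
have hta : t != a by move: hne; apply: contra => /eqP e; apply/eqP; exact: val_inj.
by rewrite nbit_pow2 (negbTE hta) andbF expr0.
Qed.

Lemma Rk_eq (R : realType) d k (g : pt d) : Rk (R:=R) k g = \prod_l (-1) ^+ (g l k).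
Proof. by rewrite /Rk /W; apply: eq_bigr => l _; rewrite W1_pow2. Qed.

Lemma W_sq (R : realType) d (n : 'I_d -> nat) (g : pt d) : W (R:=R) n g ^+ 2 = 1.
Proof.
rewrite /W -prodrXl big1 // => l _; rewrite /W1 -prodrXl big1 // => t _.
exact: sqrr_sign.
Qed.

Lemma sq1_cases (R : realType) (x : R) : x ^+ 2 = 1 -> x = 1 \/ x = -1.
Proof. by move/eqP; rewrite sqrf_eq1 => /orP[/eqP->|/eqP->]; [left|right]. Qed.

Lemma prod_sign_tog (R : realType) d (l0 : 'I_d) (f : 'I_d -> bool) :
  \prod_l (-1) ^+ (if l == l0 then ~~ f l else f l) = - \prod_l ((-1) ^+ (f l) : R).
Proof.
rewrite (bigD1 l0) //= [in RHS](bigD1 l0) //= eqxx.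
rewrite (eq_bigr (fun l => (-1) ^+ (f l))); last first.
  by move=> l /negbTE ->.
by case: (f l0); rewrite /= ?expr1 ?expr0 ?mulNr ?opprK ?mul1r ?mulN1r.
Qed.

Definition flip d (l0 : 'I_d) (t0 : nat) (g : pt d) : pt d :=
  fun l t => if (l == l0) && (t == t0) then ~~ g l t else g l t.

Lemma Rk_flip (R : realType) d (l0 : 'I_d) t0 (g : pt d) :
  Rk (R:=R) t0 (flip l0 t0 g) = - Rk t0 g.
Proof.
rewrite !Rk_eq -(prod_sign_tog R l0); apply: eq_bigr => l _.
by rewrite /flip eqxx andbT.
Qed.

Lemma flip_other d (l0 : 'I_d) t0 (g : pt d) l t : t != t0 -> flip l0 t0 g l t = g l t.
Proof. by move=> /negbTE h; rewrite /flip h andbF. Qed.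

Lemma agree_flip d (l0 : 'I_d) t0 k (g : pt d) : (k <= t0)%N -> agree k g (flip l0 t0 g).
Proof.
move=> hk l t ht; rewrite flip_other //; apply/eqP => e; subst t; lia.
Qed.

Definition tog d (l0 : 'I_d) (sg : {ffun 'I_d -> bool}) : {ffun 'I_d -> bool} :=
  [ffun l => if l == l0 then ~~ sg l else sg l].

Lemma tog_inj d (l0 : 'I_d) : injective (tog l0).
Proof.
apply: (can_inj (g := tog l0)) => sg; apply/ffunP => l; rewrite !ffunE.
by case: (l == l0); rewrite ?negbK.
Qed.

Local Close Scope classical_set_scope.
Lemma card_parity (R : realType) d (l0 : 'I_d) (w : R) : w ^+ 2 = 1 ->
  #|[set sg : {ffun 'I_d -> bool} | \prod_l (-1) ^+ (sg l) == w]| = (2 ^ d.-1)%N.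
Proof.
move=> hw.
set A := [set sg : {ffun 'I_d -> bool} | \prod_l (-1) ^+ (sg l) == w].
set B := [set sg : {ffun 'I_d -> bool} | \prod_l (-1) ^+ (sg l) == - w].
have AB : A = tog l0 @^-1: B.
  apply/setP => sg; rewrite !inE.
  have E : \prod_l ((-1) ^+ (tog l0 sg l) : R) = - \prod_l (-1) ^+ (sg l).
    by rewrite -(prod_sign_tog R l0); apply: eq_bigr => l _; rewrite ffunE.
  by rewrite E eqr_opp.
have cAB : #|A| = #|B| by rewrite AB card_preimset //; exact: tog_inj.
have w0 : w != - w.
  apply/eqP => e; have : w + w = 0 by rewrite {1}e addNr.
  move=> /eqP; rewrite -mulr2n -mulr_natr mulf_eq0 pnatr_eq0 orbF => /eqP w00.
  by move: hw; rewrite w00 expr0n /= => /eqP; rewrite eq_sym oner_eq0.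
have UI : A :&: B = finset.set0.
  apply/setP => sg; rewrite !inE; apply/negP => /andP[/eqP -> /eqP e].
  by move: w0; rewrite -e eqxx.
have UU : A :|: B = ~: finset.set0.
  apply/setP => sg; rewrite !inE.
  have : (\prod_l ((-1) ^+ (sg l) : R)) ^+ 2 = 1.
    by rewrite -prodrXl big1 // => l _; exact: sqrr_sign.
  by case/sq1_cases => ->; case/sq1_cases: hw => ->; rewrite ?opprK eqxx ?orbT.
have := cardsUI A B; rewrite UI UU cards0 addn0 cardsCs finset.setCK cards0 subn0.
rewrite card_ffun card_bool card_ord -cAB.
have d0 : (0 < d)%N by apply: leq_ltn_trans (leq0n l0) (ltn_ord l0).
move: #|A| => a; clear A B AB cAB UI UU w0 hw; case: d l0 d0 => // d' _ _ /=.
rewrite expnS => h; lia.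
Qed.
Local Open Scope classical_set_scope.

Lemma msq_ge n : (n <= msq n)%N.
Proof. elim: n => //= n IH; lia. Qed.

Lemma msq_lt i j : (i < j)%N -> (msq i < msq j)%N.
Proof.
elim: j => // j IH; rewrite ltnS leq_eqVlt => /orP[/eqP->|h] /=; first lia.
have := IH h; lia.
Qed.

Lemma msq_le i j : (i <= j)%N -> (msq i <= msq j)%N.
Proof. rewrite leq_eqVlt => /orP[/eqP->//|/msq_lt]; exact: ltnW. Qed.

Lemma msq_ltE i j : (msq i < msq j)%N = (i < j)%N.
Proof.
case: (ltnP i j) => h; first by rewrite msq_lt.
by apply/negbTE; rewrite -leqNgt; apply: msq_le.
Qed.

Lemma msq_inj i j : msq i = msq j -> i = j.
Proof.
move=> e; case: (ltngtP i j) => // h.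
- by have := msq_lt h; rewrite e ltnn.
- by have := msq_lt h; rewrite e ltnn.
Qed.

Lemma split_eq M (a b a' b' : nat) : (b < 2 ^ M)%N -> (b' < 2 ^ M)%N ->
  (2 ^ M * a + b = 2 ^ M * a' + b')%N -> a = a' /\ b = b'.
Proof.
move=> hb hb' e.
have h1 := congr1 (fun v => v %/ 2 ^ M)%N e.
have h2 := congr1 (fun v => v %% 2 ^ M)%N e.
rewrite /= !(mulnC (2 ^ M)%N) !divnMDl ?expn_gt0 // !divn_small // !addn0 in h1.
by rewrite /= !(mulnC (2 ^ M)%N) !modnMDl !modn_small // in h2.
Qed.

Lemma inr2 d M (a b : idx d M) : inrange (2 * M) (fun l => 2 ^ M * nv a l + nv b l)%N.
Proof.
move=> l; have ha := inrange_nv a l; have hb := inrange_nv b l.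
rewrite mul2n -addnn expnD.
move: (2 ^ M)%N ha hb => P ha hb; nia.
Qed.

Lemma Fp_agree {R : realType} {d j} {q : idx d (ms j) -> idx d (ms j)} {x y : pt d} :
  agree (2 * ms j).+1 x y -> Fp (R:=R) j q x -> Fp (R:=R) j q y.
Proof.
move=> H [a [b [hc hR]]]; exists a, b; split.
  by apply: cube_agree hc _; apply: agree_le H.
rewrite -hR /Rk; apply: W_agree (agree_sym H) => l; by rewrite ltn_exp2l.
Qed.

Lemma wit d j (x : pt d) : exists a b : idx d (ms j),
  cube (2 * ms j) (fun l => 2 ^ ms j * nv a l + nv b l)%N x.
Proof.
set M := ms j; set N := ixd (2 * M) x.
have hN l : (N l %/ 2 ^ M < 2 ^ M)%N.
  by rewrite ltn_divLR ?expn_gt0 // -expnD addnn -mul2n ltn_ord.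
have hM : (0 < 2 ^ M)%N by rewrite expn_gt0.
pose a : idx d M := [ffun l => Ordinal (hN l)].
pose b : idx d M := [ffun l => Ordinal (ltn_pmod (N l) hM)].
have ea l : nv a l = (N l %/ 2 ^ M)%N by rewrite /nv /a ffunE.
have eb l : nv b l = (N l %% 2 ^ M)%N by rewrite /nv /b ffunE.
exists a, b.
have -> : (fun l => 2 ^ M * nv a l + nv b l)%N = nv N.
  by apply: funext => l; rewrite ea eb (mulnC (2 ^ M)%N) -divn_eq.
exact: cube_ixd.
Qed.

Lemma Fp_iff (R : realType) d j (q : idx d (ms j) -> idx d (ms j)) (x : pt d) (a b : idx d (ms j)) :
  cube (2 * ms j) (fun l => 2 ^ ms j * nv a l + nv b l)%N x ->
  (Fp (R:=R) j q x <-> Rk (R:=R) (2 * ms j) x = Wk (ms j) (nv (q a)) (nv b)).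
Proof.
move=> hc; split; last by move=> hR; exists a, b.
move=> [a' [b' [hc' hR']]]; rewrite hR'.
have := cube_uniq (inr2 a b) (inr2 a' b') hc hc' => e.
have e' l := split_eq (inrange_nv b l) (inrange_nv b' l) (congr1 (fun f => f l) e).
have -> : a' = a by apply: nv_inj; apply: funext => l; rewrite (e' l).1.
have -> : b' = b by apply: nv_inj; apply: funext => l; rewrite (e' l).2.
by [].
Qed.

Lemma Rk_sq (R : realType) d k (g : pt d) : Rk (R:=R) k g ^+ 2 = 1.
Proof. exact: W_sq. Qed.

Lemma Fp_flip (R : realType) d (l0 : 'I_d) j (q : idx d (ms j) -> idx d (ms j)) (x : pt d) :
  ~ Fp (R:=R) j q x -> Fp (R:=R) j q (flip l0 (2 * ms j) x).
Proof.
move=> nF; have [a [b hc]] := wit j x.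
have hc2 : cube (2 * ms j) (fun l => 2 ^ ms j * nv a l + nv b l)%N (flip l0 (2 * ms j) x).
  by apply: cube_agree hc _; apply: agree_flip.
apply/(@Fp_iff R d j q _ a b hc2); rewrite Rk_flip.
have nE : Rk (R:=R) (2 * ms j) x <> Wk (ms j) (nv (q a)) (nv b) by move=> h; apply: nF; apply/(@Fp_iff R d j q _ a b hc).
have := Rk_sq R (2 * ms j) x; have := W_sq R (nv (q a)) (cube_pt (ms j) (nv b)).
rewrite /Wk in nE *.
move: (W _ _) (Rk _ _) nE => w r nE.
case/sq1_cases => hw; case/sq1_cases => hr; rewrite hw hr in nE *; rewrite ?opprK //;
  by exfalso; apply: nE.
Qed.

Definition fixj (R : realType) d (p : forall s, idx d (ms s) -> idx d (ms s)) (l0 : 'I_d)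
  (j : nat) (x : pt d) : pt d :=
  if `[< Fp (R:=R) j (p j) x >] then x else flip l0 (2 * ms j) x.

Fixpoint hseq (R : realType) d (p : forall s, idx d (ms s) -> idx d (ms s)) (l0 : 'I_d)
  (g : pt d) (i : nat) : pt d :=
  if i is i'.+1 then fixj R p l0 i'.+1 (hseq R p l0 g i') else g.

Definition hlim (R : realType) d (p : forall s, idx d (ms s) -> idx d (ms s)) (l0 : 'I_d)
  (g : pt d) : pt d := fun l t => hseq R p l0 g t.+1 l t.

Definition Good {R : realType} d (p : forall s, idx d (ms s) -> idx d (ms s)) (k : nat) (g : pt d) :=
  forall i, (0 < i)%N -> (2 * ms i < k)%N -> Fp (R:=R) i (p i) g.

Lemma fixj_P (R : realType) d p (l0 : 'I_d) j (x : pt d) : Fp (R:=R) j (p j) (fixj R p l0 j x).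
Proof.
rewrite /fixj; case: asboolP => // h; exact: Fp_flip.
Qed.

Lemma fixj_agree (R : realType) d p (l0 : 'I_d) j (x : pt d) : agree (2 * ms j) x (fixj R p l0 j x).
Proof.
rewrite /fixj; case: asboolP => h; first by move=> ? ? ?.
exact: agree_flip.
Qed.

Lemma agree_refl d k (g : pt d) : agree k g g.
Proof. by []. Qed.

Lemma hseq_agree (R : realType) d p (l0 : 'I_d) (g : pt d) i i' : (i <= i')%N ->
  agree (2 * ms i.+1) (hseq R p l0 g i) (hseq R p l0 g i').
Proof.
elim: i' => [|i' IH]; first by rewrite leqn0 => /eqP ->.
rewrite leq_eqVlt => /orP[/eqP -> //|]; rewrite ltnS => h.
apply: agree_trans (IH h) _ => /=.
apply: (@agree_le d (2 * ms i'.+1)); last exact: fixj_agree.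
rewrite leq_mul2l /=; exact: msq_le.
Qed.

Lemma hlim_agree (R : realType) d p (l0 : 'I_d) (g : pt d) i :
  agree (2 * ms i.+1) (hlim R p l0 g) (hseq R p l0 g i).
Proof.
move=> l t ht; rewrite /hlim.
case: (leqP t.+1 i) => h.
- apply: (hseq_agree R p l0 g h); have := msq_ge t.+1; rewrite /ms /=; lia.
- symmetry; exact: (hseq_agree R p l0 g (ltnW h)) l t ht.
Qed.

Lemma hlim_F (R : realType) d p (l0 : 'I_d) (g : pt d) j : (0 < j)%N ->
  Fp (R:=R) j (p j) (hlim R p l0 g).
Proof.
case: j => // j _.
apply: (Fp_agree _ (fixj_P R p l0 j.+1 (hseq R p l0 g j))).
apply: agree_sym; apply: (@agree_le d (2 * ms j.+2)); last exact: hlim_agree.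
rewrite /ms /=; lia.
Qed.

Lemma hseq_good (R : realType) d p (l0 : 'I_d) k (g : pt d) i :
  Good (R:=R) p k g -> agree k g (hseq R p l0 g i).
Proof.
move=> G; elim: i => [|i IH] //=.
rewrite /fixj; case: asboolP => hF //.
case: (ltnP (2 * ms i.+1) k) => hk.
- exfalso; apply: hF; apply: (Fp_agree _ (G i.+1 isT hk)).
  exact: agree_le hk IH.
- apply: agree_trans IH _; exact: agree_flip.
Qed.

Lemma hlim_good (R : realType) d p (l0 : 'I_d) k (g : pt d) :
  Good (R:=R) p k g -> agree k g (hlim R p l0 g).
Proof.
move=> G l t ht; rewrite /hlim; exact: (hseq_good l0 t.+1 G l ht).
Qed.

Lemma Good_of_F (R : realType) d p k (g h : pt d) :
  Finfp (R:=R) p h -> agree k g h -> Good (R:=R) p k g.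
Proof.
move=> hF H i i0 hi; apply: (Fp_agree _ (hF i i0)).
apply: agree_sym; exact: agree_le H.
Qed.

Lemma Good_agree (R : realType) d p k (g h : pt d) :
  Good (R:=R) p k g -> agree k g h -> Good (R:=R) p k h.
Proof.
move=> G H i i0 hi; apply: (Fp_agree _ (G i i0 hi)); exact: agree_le H.
Qed.

Lemma Good_le (R : realType) d p k k' (g : pt d) :
  (k' <= k)%N -> Good (R:=R) p k g -> Good (R:=R) p k' g.
Proof. by move=> hk G i i0 hi; apply: G i0 _; apply: leq_trans hk. Qed.

Lemma meetsF (R : realType) d (p : forall s, idx d (ms s) -> idx d (ms s)) (l0 : 'I_d) k (m : 'I_d -> nat) :
  (cube k m `&` Finfp (R:=R) p !=set0) <-> Good (R:=R) p k (cube_pt k m).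
Proof.
split.
- move=> [h [hc hF]]; apply: Good_of_F hF _; apply: agree_sym; exact/cubeE.
- move=> G; exists (hlim R p l0 (cube_pt k m)); split.
  + exact: (cube_agree (@cube_pt_in d k m) (hlim_good l0 G)).
  + move=> s hs; exact: (hlim_F R p l0 _ hs).
Qed.

Definition crit (k : nat) : bool := [exists j : 'I_k.+2, (0 < j)%N && (2 * ms j == k)%N].

Lemma critP k : reflect (exists j, (0 < j)%N /\ (2 * ms j = k)%N) (crit k).
Proof.
apply: (iffP existsP).
- by move=> [j /andP[j0 /eqP e]]; exists j.
- move=> [j [j0 e]].
  have hj : (j < k.+2)%N.
    case: j j0 e => // j _; rewrite /ms /= => e; have := msq_ge j; lia.
  by exists (Ordinal hj); rewrite /= j0 e eqxx.
Qed.

Fixpoint Nc k := if k is k'.+1 then (Nc k' + crit k')%N else 0%N.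

Lemma NcS k : Nc k.+1 = (Nc k + crit k)%N.
Proof. by []. Qed.

Lemma ms_inj i j : (0 < i)%N -> (0 < j)%N -> ms i = ms j -> i = j.
Proof. case: i => // i; case: j => // j _ _; rewrite /ms /= => /msq_inj ->. by []. Qed.

Lemma ms_ltE i j : (0 < i)%N -> (0 < j)%N -> (ms i < ms j)%N = (i < j)%N.
Proof. by case: i => // i; case: j => // j _ _; rewrite /ms /= msq_ltE. Qed.

Lemma crit_none s k : (0 < s)%N -> (2 * ms s < k)%N -> (k < 2 * ms s.+1)%N -> ~~ crit k.
Proof.
move=> s0 h1 h2; apply/negP => /critP [j [j0 e]]; subst k.
have a1 : (ms s < ms j)%N by lia.
have a2 : (ms j < ms s.+1)%N by lia.
rewrite ms_ltE // in a1; rewrite ms_ltE // in a2; lia.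
Qed.

Lemma ms_le_S s : (0 < s)%N -> ((2 * ms s).+1 <= 2 * ms s.+1)%N.
Proof. by case: s => // s _; rewrite /ms /=; lia. Qed.

Lemma Nc_ms s : (0 < s)%N -> Nc (2 * ms s).+1 = s.
Proof.
elim: s => // s IH _.
case: s IH => [|s] IH.
  rewrite /= (_ : crit 0 = true) //; apply/critP; by exists 1%N.
have s0 : (0 < s.+1)%N by [].
have H i : ((2 * ms s.+1).+1 + i <= 2 * ms s.+2)%N ->
    Nc ((2 * ms s.+1).+1 + i) = Nc (2 * ms s.+1).+1.
  elim: i => [|i IHi]; first by rewrite addn0.
  move=> hi; rewrite addnS NcS IHi; last by lia.
  rewrite (negbTE (crit_none s0 _ _)) ?addn0 //; lia.
have hle := ms_le_S s0.
have E := H (2 * ms s.+2 - (2 * ms s.+1).+1)%N.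
rewrite subnKC // in E; rewrite NcS E // IH //.
rewrite (_ : crit (2 * ms s.+2) = true) ?addn1 //; apply/critP; by exists s.+2.
Qed.

Lemma Good_S_noncrit (R : realType) d p k (g : pt d) :
  ~~ crit k -> Good (R:=R) p k g -> Good (R:=R) p k.+1 g.
Proof.
move=> nc G i i0 hi; rewrite ltnS leq_eqVlt in hi; case/orP: hi => [/eqP e|hi].
- by exfalso; move/negP: nc; apply; apply/critP; exists i.
- exact: G.
Qed.

Lemma Good_S_crit (R : realType) d p k j (g : pt d) :
  (0 < j)%N -> (2 * ms j = k)%N ->
  Good (R:=R) p k.+1 g <-> (Good (R:=R) p k g /\ Fp (R:=R) j (p j) g).
Proof.
move=> j0 e; split.
- move=> G; split; first exact: Good_le G.
  by apply: G j0 _; rewrite e.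
- move=> [G F] i i0 hi; rewrite ltnS leq_eqVlt in hi; case/orP: hi => [/eqP e'|hi].
  + have -> : i = j by apply: ms_inj => //; lia.
    exact: F.
  + exact: G.
Qed.

Lemma cpt_child_agree d k (m : 'I_d -> nat) sg :
  agree k (cube_pt k.+1 (child m sg)) (cube_pt k m).
Proof.
apply/cubeE; have /cube_child [] := @cube_pt_in d k.+1 (child m sg); by [].
Qed.

Lemma cpt_child_k d k (m : 'I_d -> nat) sg l :
  cube_pt k.+1 (child m sg) l k = sg l.
Proof.
have /cube_child [_ ->] := @cube_pt_in d k.+1 (child m sg); by [].
Qed.

Lemma tau_zero (R : realType) d (p : forall s, idx d (ms s) -> idx d (ms s)) (l0 : 'I_d)
  (tau : nat -> ('I_d -> nat) -> R) k m :
  is_tauE (Finfp (R:=R) p) tau -> inrange k m -> ~ Good (R:=R) p k (cube_pt k m) -> tau k m = 0.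
Proof.
case=> _ _ _ Hz _ hr nG; apply/(Hz k m hr).
apply/seteqP; split=> [x [hc hF]|//]; exfalso; apply: nG; apply/(meetsF R p l0 k m); by exists x.
Qed.

Lemma sum_if_const (R : realType) (T : finType) (P : T -> bool) (t : R) :
  \sum_(i : T) (if P i then t else 0) = t *+ #|[pred i | P i]|.
Proof. by rewrite -big_mkcond /= -sumr_const. Qed.

Lemma tau_val (R : realType) d (p : forall s, idx d (ms s) -> idx d (ms s)) (l0 : 'I_d)
  (tau : nat -> ('I_d -> nat) -> R) :
  is_tauE (Finfp (R:=R) p) tau -> forall k m, inrange k m -> Good (R:=R) p k (cube_pt k m) ->
  tau k m = 2 ^+ Nc k / 2 ^+ (k * d).
Proof.
move=> ht; have [Hq _ H0 Hz Hs] := ht.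
elim=> [|k IH] m' hr G'.
  have -> : m' = (fun _ => 0%N) by apply: funext => l; have := hr l; rewrite expn0; lia.
  by rewrite H0 /= mul0n expr0 divr1.
pose m := fun l => ((m' l)./2)%N.
pose sg0 : {ffun 'I_d -> bool} := [ffun l => odd (m' l)].
have em : child m sg0 = m'.
  apply: funext => l; rewrite /child /m /sg0 ffunE.
  by rewrite -[in RHS](odd_double_half (m' l)) -muln2 mulnC addnC.
have hm : inrange k m by move=> l; rewrite /m -divn2 ltn_divLR // -expnSr; exact: hr.
have hc sg : inrange k.+1 (child m sg).
  by move=> l; rewrite /child expnS; have := hm l; case: (sg l) => /=; lia.
have Gk : Good (R:=R) p k (cube_pt k m).
  apply: (Good_agree (g := cube_pt k.+1 m')); first exact: Good_le G'.
  rewrite -em; exact: cpt_child_agree.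
have Gch sg : Good (R:=R) p k (cube_pt k.+1 (child m sg)).
  apply: Good_agree Gk _; apply: agree_sym; exact: cpt_child_agree.
have IHm := IH m hm Gk.
have hsum := Hq k m hm.
have eterm sg : tau k.+1 (child m sg) =
    if `[< Good (R:=R) p k.+1 (cube_pt k.+1 (child m sg)) >] then tau k.+1 m' else 0.
  case: asboolP => hG.
  - rewrite -[in RHS]em; apply: Hs => //; apply/(meetsF R p l0) => //; by rewrite em.
  - exact: (tau_zero (p:=p) l0).
rewrite (eq_bigr _ (fun sg _ => eterm sg)) sum_if_const IHm in hsum.
have d0 : (0 < d)%N by apply: leq_ltn_trans (leq0n l0) (ltn_ord l0).
have ne2 n : (2 : R) ^+ n != 0 by rewrite expf_neq0 // pnatr_eq0.
case: (boolP (crit k)) => ck.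
- have [j [j0 e]] := critP k ck.
  have [a [b hcw]] := wit j (cube_pt k m).
  pose w : R := Wk (ms j) (nv (p j a)) (nv b).
  have cnt : #|[pred sg : {ffun 'I_d -> bool} | `[< Good (R:=R) p k.+1 (cube_pt k.+1 (child m sg)) >]]|
      = (2 ^ d.-1)%N.
    rewrite -(card_parity l0 (W_sq R (nv (p j a)) (cube_pt (ms j) (nv b)))).
    apply: eq_card => sg; rewrite !inE.
    apply/asboolP/eqP.
    + move/(Good_S_crit R p _ j0 e) => [_ hF].
      have hc2 : cube (2 * ms j) (fun l => 2 ^ ms j * nv a l + nv b l)%N (cube_pt k.+1 (child m sg)).
        apply: cube_agree hcw _; rewrite e; apply: agree_sym; exact: cpt_child_agree.
      move/(@Fp_iff R d j (p j) _ a b hc2): hF; rewrite Rk_eq e /Wk => <-.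
      by apply: eq_bigr => l _; rewrite cpt_child_k.
    + move=> hw; apply/(Good_S_crit R p _ j0 e); split; first exact: Gch.
      have hc2 : cube (2 * ms j) (fun l => 2 ^ ms j * nv a l + nv b l)%N (cube_pt k.+1 (child m sg)).
        apply: cube_agree hcw _; rewrite e; apply: agree_sym; exact: cpt_child_agree.
      apply/(@Fp_iff R d j (p j) _ a b hc2); rewrite Rk_eq e -[RHS]hw.
      by apply: eq_bigr => l _; rewrite cpt_child_k.
  have e2 : tau k.+1 m' *+ (2 ^ d.-1)%N = tau k.+1 m' * 2 ^+ d.-1 by rewrite -natrX mulr_natr.
  rewrite cnt e2 in hsum.
  rewrite NcS ck (_ : nat_of_bool true = 1%N) // addn1 mulSn exprD exprS.
  have h2d : (2 : R) ^+ d = 2 * 2 ^+ d.-1 by rewrite -exprS prednK.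
  rewrite h2d; move: (tau k.+1 m') hsum => t hsum.
  apply: (mulIf (ne2 d.-1)); rewrite -hsum; field.
  by rewrite !ne2.
- have cnt : #|[pred sg : {ffun 'I_d -> bool} | `[< Good (R:=R) p k.+1 (cube_pt k.+1 (child m sg)) >]]|
      = (2 ^ d)%N.
    transitivity #|{ffun 'I_d -> bool}|; last by rewrite card_ffun card_bool card_ord.
    apply: eq_card => sg; rewrite !inE; apply/asboolP; apply: Good_S_noncrit ck (Gch sg).
  have e2 : tau k.+1 m' *+ (2 ^ d)%N = tau k.+1 m' * 2 ^+ d by rewrite -natrX mulr_natr.
  rewrite cnt e2 in hsum.
  rewrite NcS (negbTE ck) addn0 mulSn exprD.
  apply: (mulIf (ne2 d)); rewrite -hsum; field.
  by rewrite !ne2.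
Qed.

Lemma cube_meas d k (m : 'I_d -> nat) : measurable (cube k m : set (Gd d)).
Proof. by apply: sub_sigma_algebra; exists k, m. Qed.

Definition detset d K (S : set (pt d)) := forall x y, agree K x y -> S x -> S y.

Definition cubes_of d K (S : set (pt d)) : seq (idx d K) :=
  [seq m <- index_enum (idx d K) | `[< S (cube_pt K (nv m)) >]].

Lemma det_union d K (S : set (pt d)) : detset K S ->
  S = \big[setU/set0]_(m <- cubes_of K S) cube K (nv m).
Proof.
move=> dS; rewrite -bigcup_seq; apply/seteqP; split.
- move=> x Sx; exists (ixd K x).
    rewrite /= mem_filter mem_index_enum andbT; apply/asboolP.
    by apply: dS Sx; apply/cubeE; exact: cube_ixd.
  exact: cube_ixd.
- move=> x [m]; rewrite /= mem_filter => /andP[/asboolP Sm _] hx.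
  by apply: dS Sm; apply: agree_sym; apply/cubeE.
Qed.

Lemma det_meas d K (S : set (pt d)) : detset K S -> measurable (S : set (Gd d)).
Proof.
move=> dS; rewrite (det_union dS); apply: bigsetU_measurable => m _; exact: cube_meas.
Qed.

Lemma cubes_triv d K (S : set (pt d)) : trivIset [set` cubes_of K S] (fun m => cube K (nv m)).
Proof.
move=> i j _ _ [x [hi hj]]; apply: nv_inj.
exact: cube_uniq (inrange_nv i) (inrange_nv j) hi hj.
Qed.

Lemma cubes_uniq d K (S : set (pt d)) : uniq (cubes_of K S).
Proof. by rewrite filter_uniq // index_enum_uniq. Qed.

Lemma gadd_cube d k (m : 'I_d -> nat) :
  [set gadd (cube_pt k m) x | x in (cube k (fun _ => 0%N) : set (pt d))] = cube k m.
Proof.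
have n0 i : nbit 0 i = false by rewrite /nbit div0n.
apply/seteqP; split.
- move=> y [x hx <-] l t ht; rewrite /gadd hx // n0 addbF /cube_pt ht //.
- move=> y hy; exists (gadd (cube_pt k m) y).
    move=> l t ht; rewrite /gadd hy // n0 /cube_pt ht; exact: addbb.
  by apply: funext => l; apply: funext => t; rewrite /gadd addbA addbb.
Qed.

Lemma mu_cube (R : realType) d (hd : (0 < d)%N)
  (mu : {measure set (Gd d) -> \bar R})
  (mu1 : mu setT = 1%E)
  (mu_inv : forall (h : pt d) (A : set (Gd d)),
      measurable A -> mu [set gadd h x | x in A] = mu A) k (m : 'I_d -> nat) :
  mu (cube k m) = ((2 ^+ (k * d))^-1 : R)%:E.
Proof.
have eqc m' : mu (cube k m') = mu (cube k (fun _ => 0%N)).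
  by rewrite -(gadd_cube k m') mu_inv //; exact: cube_meas.
rewrite eqc.
have c0 : (0 <= mu (cube k (fun _ => 0%N)))%E by exact: measure_ge0.
have c1 : (mu (cube k (fun _ => 0%N)) <= 1)%E.
  rewrite -mu1; apply: (le_measure mu (mem_set (cube_meas k _)) (mem_set (@measurableT _ (Gd d)))) => //.
have cfin : mu (cube k (fun _ => 0%N)) \is a fin_num.
  by rewrite fin_numElt (lt_le_trans _ c0) ?ltNyr //= (le_lt_trans c1) // ltry.
rewrite -(fineK cfin); move: (fine _) (fineK cfin) => r hr.
have dT : detset k (setT : set (pt d)) by [].
have E1 : (\int[mu]_(x in (setT : set (Gd d))) ((fun _ : pt d => (1 : R)) x)%:E = 1)%E.
  by have := integral_cst mu (@measurableT _ (Gd d)) 1%E; rewrite mu1 mul1e.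
rewrite {1}(det_union dT) integral_bigsetU_EFin in E1; first last.
- apply/measurable_realfun.measurable_EFinP; move=> mD Y mY; apply: measurableI => //.
  by rewrite preimage_cst; case: ifP => _; [exact: measurableT | exact: measurable0].
- exact: cubes_triv.
- exact: cubes_uniq.
- by move=> i; exact: cube_meas.
rewrite (eq_bigr (fun _ => r%:E)) in E1; last first.
  move=> i _; have := integral_cst mu (cube_meas k (nv i)) 1%E.
  by rewrite mul1e eqc hr => <-.
rewrite sumEFin big_filter (eq_bigl xpredT) in E1; last by move=> i; apply/asboolP.
rewrite sumr_const card_ffun !card_ord -mulr_natr in E1.
case: E1 => E1; congr (_%:E).
rewrite natrX natrX in E1.
have ne : ((2 : R) ^+ k) ^+ d != 0 by rewrite !expf_neq0 // pnatr_eq0.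
by rewrite exprM; apply: (mulIf ne); rewrite E1 mulVf.
Qed.

Lemma main_p (R : realType) d (hd : (0 < d)%N) (l0 : 'I_d)
  (mu : {measure set (Gd d) -> \bar R}) (mu1 : mu setT = 1%E)
  (mu_inv : forall (h : pt d) (A : set (Gd d)),
      measurable A -> mu [set gadd h x | x in A] = mu A)
  (p : forall s, idx d (ms s) -> idx d (ms s))
  s (n m0 : 'I_d -> nat) (tau : nat -> ('I_d -> nat) -> R) :
  (1 <= s)%N -> (forall l, (n l < 2 ^ (2 * ms s + 1))%N) -> inrange (ms s) m0 ->
  cube (ms s) m0 `<=` Ftilp (R:=R) p s.-1 -> is_tauE (Finfp (R:=R) p) tau ->
  (\int[mu]_(x in Fp (R:=R) s (p s) `&` cube (ms s) m0) (W n x)%:E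
    = ((2 ^- s) * tau_hat tau n (ms s) m0 (2 * ms s + 1))%:E)%E.
Proof.
move=> s1 hn hm0 hsub ht.
rewrite addn1 in hn *.
set K := (2 * ms s).+1.
set A := Fp (R:=R) s (p s) `&` cube (ms s) m0.
have hK : (ms s <= K)%N by rewrite /K; lia.
have dA : detset K A.
  move=> x y H [hF hc]; split.
  - exact: Fp_agree H hF.
  - apply: cube_agree hc _; exact: agree_le H.
have Wc (m : idx d K) x : cube K (nv m) x -> W (R:=R) n x = Wk K n (nv m).
  move=> hx; rewrite /Wk; apply: (W_agree R hn); exact/cubeE.
have c := mu_cube hd mu1 mu_inv.
rewrite (det_union dA) integral_bigsetU_EFin; first last.
- apply/measurable_realfun.measurable_EFinP => mD Y mY; apply: measurableI => //.
  apply: (det_meas (K := K)) => x y H; rewrite /preimage /=.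
  by rewrite (W_agree R hn H).
- exact: cubes_triv.
- exact: cubes_uniq.
- by move=> i; exact: cube_meas.
rewrite (eq_bigr (fun m => (Wk K n (nv m) * (2 ^+ (K * d))^-1)%:E)); last first.
  move=> m _; rewrite (eq_integral (cst (Wk K n (nv m))%:E)); last first.
    by move=> x; rewrite in_setE => hx; rewrite /= (Wc m x hx).
  by rewrite integral_cst ?c //; exact: cube_meas.
rewrite sumEFin big_filter; congr (_%:E).
rewrite /tau_hat mulr_sumr [RHS]big_mkcond [LHS]big_mkcond; apply: eq_bigr => m _.
have ne2 j : (2 : R) ^+ j != 0 by rewrite expf_neq0 // pnatr_eq0.
case: asboolP => hA; case: asboolP => hQ.
- have G : Good (R:=R) p K (cube_pt K (nv m)).
    move=> i i0 hi.
    have hi' : (ms i <= ms s)%N by rewrite /K in hi; lia.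
    case: (ltngtP i s) => his.
    + apply: (hsub _ hA.2); rewrite i0 /=; lia.
    + by move: hi'; rewrite leqNgt ms_ltE // ?his //; lia.
    + by rewrite his; exact: hA.1.
  rewrite (tau_val l0 ht (inrange_nv m) G) Nc_ms //.
  by field; rewrite !ne2.
- exfalso; apply: hQ => y hy; apply: cube_agree hA.2 _.
  apply: agree_le hK _; apply: agree_sym; exact/cubeE.
- rewrite (tau_zero l0 ht (inrange_nv m)) ?mulr0 //.
  move=> G; apply: hA; split.
  + exact: G s s1 (ltnSn _).
  + by apply: hQ; apply: cube_pt_in.
- by [].
Qed.

Theorem lemma5 (R : realType) (d : nat) (hd : (2 <= d)%N)
  (mu : {measure set (Gd d) -> \bar R})
  (mu1 : mu setT = 1%E)
  (mu_inv : forall (h : pt d) (A : set (Gd d)),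
      measurable A -> mu [set gadd h x | x in A] = mu A) :
  (forall (s : nat) (n m0 : 'I_d -> nat) (tau : nat -> ('I_d -> nat) -> R),
      (1 <= s)%N ->
      (forall l, (n l < 2 ^ (2 * ms s + 1))%N) ->
      inrange (ms s) m0 ->
      cube (ms s) m0 `<=` @Ftil R d s.-1 ->
      is_tauE (@Finf R d) tau ->
      (\int[mu]_(x in @Fs R d s `&` cube (ms s) m0) (W n x)%:E
        = ((2 ^- s) * tau_hat tau n (ms s) m0 (2 * ms s + 1))%:E)%E)
  /\
  (forall (pi : forall s, {perm idx d (ms s)})
          (s : nat) (n m0 : 'I_d -> nat) (tau : nat -> ('I_d -> nat) -> R),
      (1 <= s)%N ->
      (forall l, (n l < 2 ^ (2 * ms s + 1))%N) ->
      inrange (ms s) m0 ->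
      cube (ms s) m0 `<=` Ftilp (R := R) (fun k => pi k) s.-1 ->
      is_tauE (Finfp (R := R) (fun k => pi k)) tau ->
      (\int[mu]_(x in Fp (R := R) s (pi s) `&` cube (ms s) m0) (W n x)%:E
        = ((2 ^- s) * tau_hat tau n (ms s) m0 (2 * ms s + 1))%:E)%E).
Proof.
have d0 : (0 < d)%N by apply: leq_trans hd.
pose l0 : 'I_d := Ordinal d0.
split.
- move=> s n m0 tau s1 hn hm hsub ht.
  exact: (@main_p R d d0 l0 mu mu1 mu_inv (fun s => id) s n m0 tau s1 hn hm hsub ht).
- move=> pi s n m0 tau s1 hn hm hsub ht.
  exact: (@main_p R d d0 l0 mu mu1 mu_inv (fun k => pi k) s n m0 tau s1 hn hm hsub ht).
Qed.
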